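(* The map $(\mathfrak F,\mathfrak G)\mapsto\mathrm{St}_{\mathfrak F}\cap\mathrm{St}_{\mathfrak G}$ from the set of taut couples of generalized flags in $V$ and $V_*$ to the set of subalgebras of $\mathfrak{gl}(V,V_* )$ is injective.
   Context: $V,V_*$: countable-dimensional complex spaces with nondegenerate pairing; $\mathfrak{gl}(V,V_* )=V\otimes V_*$ acting on $V$ by $(v\otimes w)u=\langle u,w\rangle v$ and on $V_*$ by $(v\otimes w)y=-\langle v,y\rangle w$. Orthogonal complement $F^\perp$; closed: $F=F^{\perp\perp}$; $\overline F=F^{\perp\perp}$. Generalized flag: chain of subspaces, every member in an immediate predecessor–successor pair $F'\subsetneq F''$ (no member strictly between), every nonzero vector in $F''\setminus F'$ for some pair. Semiclosed: $\overline{F'}\in\{F',F''\}$ for every pair. $\mathrm{St}$ = stabilizer in $\mathfrak{gl}(V,V_* )$. Taut couple: semiclosed generalized flags $\mathfrak F$ in $V$, $\mathfrak G$ in $V_*$ with $\mathfrak F^\perp=\{F^\perp\}$ stable under $\mathrm{St}_{\mathfrak G}$ and $\mathfrak G^\perp$ stable under $\mathrm{St}_{\mathfrak F}$. *)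

(* Defs.v *)
From HB Require Import structures.
From mathcomp Require Import all_boot all_order all_algebra.
Set Implicit Arguments. Unset Strict Implicit. Unset Printing Implicit Defensive.
Import GRing.Theory.
Local Open Scope ring_scope.

Definition incl {X : Type} (A B : X -> Prop) : Prop := forall x, A x -> B x.
Definition sincl {X : Type} (A B : X -> Prop) : Prop := incl A B /\ ~ incl B A.

Definition subspace (K : pzRingType) (X : lmodType K) (A : X -> Prop) : Prop :=
  A 0 /\ (forall x y, A x -> A y -> A (x + y)) /\ (forall (a : K) x, A x -> A (a *: x)).

Definition countable_dim (K : pzRingType) (X : lmodType K) : Prop :=
  exists e : nat -> X, forall x : X,
    exists s : seq (K * nat), x = \sum_(c <- s) c.1 *: e c.2.

Definition chain {X : Type} (fam : (X -> Prop) -> Prop) : Prop :=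
  forall A B, fam A -> fam B -> incl A B \/ incl B A.

Definition imm_pair {X : Type} (fam : (X -> Prop) -> Prop) (A B : X -> Prop) : Prop :=
  fam A /\ fam B /\ sincl A B /\ ~ (exists C, fam C /\ sincl A C /\ sincl C B).

Definition gen_flag (K : pzRingType) (X : lmodType K) (fam : (X -> Prop) -> Prop) : Prop :=
  [/\ (forall A, fam A -> subspace A),
      chain fam,
      (forall A, fam A -> exists A' A'', imm_pair fam A' A'' /\ (A = A' \/ A = A''))
    & (forall x : X, x <> 0 -> exists A' A'', imm_pair fam A' A'' /\ A'' x /\ ~ A' x)].

Definition semiclosed {X : Type} (cl : (X -> Prop) -> (X -> Prop))
  (fam : (X -> Prop) -> Prop) : Prop :=
  forall A' A'', imm_pair fam A' A'' -> cl A' = A' \/ cl A' = A''.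

Section Pairing.
Variables (K : pzRingType) (V W : lmodType K) (p : V -> W -> K).

Definition perpV (A : V -> Prop) : W -> Prop := fun y => forall u, A u -> p u y = 0.
Definition perpW (B : W -> Prop) : V -> Prop := fun u => forall y, B y -> p u y = 0.
Definition closV (A : V -> Prop) : V -> Prop := perpW (perpV A).
Definition closW (B : W -> Prop) : W -> Prop := perpV (perpW B).

(* An element of gl(V,V_* ) = V ⊗ V_* is given by a representative
   s = [:: (v_1,w_1); ...] standing for sum_i v_i ⊗ w_i. *)
Definition actV (s : seq (V * W)) (u : V) : V := \sum_(x <- s) p u x.2 *: x.1.
Definition actW (s : seq (V * W)) (y : W) : W := - \sum_(x <- s) p x.1 y *: x.2.

Definition stab {X : Type} (act : X -> X) (fam : (X -> Prop) -> Prop) : Prop :=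
  forall A, fam A -> forall x, A x -> A (act x).

Definition StV (fam : (V -> Prop) -> Prop) (s : seq (V * W)) : Prop := stab (actV s) fam.
Definition StW (fam : (W -> Prop) -> Prop) (s : seq (V * W)) : Prop := stab (actW s) fam.

Definition perp_famV (fam : (V -> Prop) -> Prop) : (W -> Prop) -> Prop :=
  fun B => exists A, fam A /\ B = perpV A.
Definition perp_famW (fam : (W -> Prop) -> Prop) : (V -> Prop) -> Prop :=
  fun A => exists B, fam B /\ A = perpW B.

Definition taut_couple (F : (V -> Prop) -> Prop) (G : (W -> Prop) -> Prop) : Prop :=
  gen_flag F /\ semiclosed closV F /\ gen_flag G /\ semiclosed closW G /\
  (forall s, StW G s -> StW (perp_famV F) s) /\
  (forall s, StV F s -> StV (perp_famW G) s).

End Pairing.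

(* Main.v *)
Require Import Defs.
From HB Require Import structures.
From mathcomp Require Import all_boot all_order all_algebra.
From Stdlib Require Import Classical FunctionalExtensionality PropExtensionality.
Set Implicit Arguments. Unset Strict Implicit. Unset Printing Implicit Defensive.
Import GRing.Theory.
Local Open Scope ring_scope.

Definition pl (K : fieldType) (X Y : lmodType K) (q : X -> Y -> K) (A : X -> Prop) : Y -> Prop :=
  fun y => forall x, A x -> q x y = 0.
Definition pr (K : fieldType) (X Y : lmodType K) (q : X -> Y -> K) (B : Y -> Prop) : X -> Prop :=
  fun x => forall y, B y -> q x y = 0.
Definition Dn (K : fieldType) (X : lmodType K) (F : (X -> Prop) -> Prop) (v : X) : X -> Prop :=
  fun x => exists A, F A /\ ~ A v /\ A x.
Definition Up (K : fieldType) (X : lmodType K) (F : (X -> Prop) -> Prop) (v : X) : X -> Prop :=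
  fun u => u = 0 \/ (u <> 0 /\ forall x, Dn F u x -> Dn F v x).

Lemma sub_0 (K : fieldType) (X : lmodType K) (A : X -> Prop) : subspace A -> A 0.
Proof. by case. Qed.
Lemma sub_Z (K : fieldType) (X : lmodType K) (A : X -> Prop) a x : subspace A -> A x -> A (a *: x).
Proof. by case=> _ [_ H] /H. Qed.
Lemma sub_N (K : fieldType) (X : lmodType K) (A : X -> Prop) x : subspace A -> A x -> A (- x).
Proof. by move=> sA Ax; rewrite -scaleN1r; apply: sub_Z. Qed.
Lemma sub_Zinv (K : fieldType) (X : lmodType K) (A : X -> Prop) (c : K) x :
  subspace A -> c != 0 -> A (c *: x) -> A x.
Proof.
move=> sA c0 Ax; have := sub_Z (c^-1) sA Ax.
by rewrite scalerA mulVf // scale1r.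
Qed.

Lemma lin0l (K : fieldType) (X Y : lmodType K) (q : X -> Y -> K)
  (ql : forall (y : Y) (a : K) (u v : X), q (a *: u + v) y = a * q u y + q v y) y : q 0 y = 0.
Proof.
have := ql y 1 0 0; rewrite scaler0 addr0 mul1r => H.
by apply: (@addrI _ (q 0 y)); rewrite addr0 -H.
Qed.
Lemma linZl (K : fieldType) (X Y : lmodType K) (q : X -> Y -> K)
  (ql : forall (y : Y) (a : K) (u v : X), q (a *: u + v) y = a * q u y + q v y) y a u :
  q (a *: u) y = a * q u y.
Proof. by have := ql y a u 0; rewrite addr0 (lin0l ql) addr0. Qed.
Lemma linNl (K : fieldType) (X Y : lmodType K) (q : X -> Y -> K)
  (ql : forall (y : Y) (a : K) (u v : X), q (a *: u + v) y = a * q u y + q v y) y u :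
  q (- u) y = - q u y.
Proof. by rewrite -scaleN1r (linZl ql) mulN1r. Qed.


Lemma fl_sub (K : fieldType) (X : lmodType K) (F : (X -> Prop) -> Prop) A :
  gen_flag F -> F A -> subspace A.
Proof. by case=> H _ _ _; apply: H. Qed.

Lemma ip_incl (K : fieldType) (X : lmodType K) (F : (X -> Prop) -> Prop) P P' :
  imm_pair F P P' -> incl P P'.
Proof. by case=> _ [_ [[]]]. Qed.

Lemma L1 (K : fieldType) (X : lmodType K) (F : (X -> Prop) -> Prop) P P' A :
  gen_flag F -> imm_pair F P P' -> F A -> incl A P' -> ~ incl P' A -> incl A P.
Proof.
move=> [_ ch _ _] [FP [FP' [sPP' nb]]] FA sAP' nsP'A.
case: (ch A P FA FP) => // sPA.
case: (classic (incl A P)) => // nAP; exfalso; apply: nb.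
by exists A; split=> //; split; split.
Qed.

Lemma L2 (K : fieldType) (X : lmodType K) (F : (X -> Prop) -> Prop) P P' A :
  gen_flag F -> imm_pair F P P' -> F A -> ~ incl A P -> incl P' A.
Proof.
move=> HF ip FA nAP; have [_ ch _ _] := HF; have [_ [FP' _]] := ip.
case: (ch A P' FA FP') => // sAP'.
case: (classic (incl P' A)) => // nP'A.
by case: nAP; apply: (L1 HF ip).
Qed.

Lemma cover (K : fieldType) (X : lmodType K) (F : (X -> Prop) -> Prop) (v : X) :
  gen_flag F -> v <> 0 -> exists P P', imm_pair F P P' /\ P' v /\ ~ P v.
Proof. by case=> _ _ _ H4; apply: H4. Qed.

Lemma Dn_sub (K : fieldType) (X : lmodType K) (F : (X -> Prop) -> Prop) P P' v A :
  gen_flag F -> imm_pair F P P' -> P' v -> ~ P v -> F A -> ~ A v -> incl A P.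
Proof.
move=> HF ip P'v nPv FA nAv; have [_ ch _ _] := HF; have [_ [FP' _]] := ip.
apply: (L1 HF ip FA); last by move=> H; apply: nAv; apply: H.
by case: (ch A P' FA FP') => // H; case: nAv; apply: H.
Qed.

Lemma D_eq (K : fieldType) (X : lmodType K) (F : (X -> Prop) -> Prop) P P' v :
  gen_flag F -> imm_pair F P P' -> P' v -> ~ P v -> forall x, Dn F v x <-> P x.
Proof.
move=> HF ip P'v nPv x; split.
  by case=> A [FA [nAv Ax]]; apply: (Dn_sub HF ip P'v nPv FA nAv).
by move=> Px; exists P; case: ip => FP _; split.
Qed.

Lemma above (K : fieldType) (X : lmodType K) (F : (X -> Prop) -> Prop) P P' u A :
  gen_flag F -> imm_pair F P P' -> P' u -> ~ P u -> F A -> A u -> incl P' A.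
Proof.
move=> HF ip P'u nPu FA Au; apply: (L2 HF ip FA).
by move=> H; apply: nPu; apply: H.
Qed.

Definition SCh (K : fieldType) (X Y : lmodType K) (q : X -> Y -> K) (F : (X -> Prop) -> Prop) :=
  forall P P', imm_pair F P P' ->
    (forall x, pr q (pl q P) x -> P x) \/ (forall x, pr q (pl q P) x <-> P' x).

Lemma cl_mono (K : fieldType) (X Y : lmodType K) (q : X -> Y -> K) A B :
  incl A B -> incl (pr q (pl q A)) (pr q (pl q B)).
Proof. by move=> sAB x Hx y Hy; apply: Hx => z Az; apply: Hy; apply: sAB. Qed.

Lemma cl_ext (K : fieldType) (X Y : lmodType K) (q : X -> Y -> K) A B :
  (forall x, A x <-> B x) -> forall x, pr q (pl q A) x <-> pr q (pl q B) x.
Proof. by move=> e x; split; apply: cl_mono => z /e. Qed.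

Lemma cl_in (K : fieldType) (X Y : lmodType K) (q : X -> Y -> K) (A : X -> Prop) x :
  A x -> pr q (pl q A) x.
Proof. by move=> Ax y Hy; apply: Hy. Qed.

Lemma cl_sub_P' (K : fieldType) (X Y : lmodType K) (q : X -> Y -> K) F P P' :
  SCh q F -> imm_pair F P P' -> forall x, pr q (pl q P) x -> P' x.
Proof.
move=> SC ip x Hx; case: (SC _ _ ip) => H; last by apply/H.
by apply: (ip_incl ip); apply: H.
Qed.

Lemma D_char (K : fieldType) (X Y : lmodType K) (q : X -> Y -> K) F (v : X) :
  gen_flag F -> SCh q F -> v <> 0 -> forall u,
  Dn F v u <-> (u = 0 \/ (u <> 0 /\ pr q (pl q (Dn F v)) u /\ ~ pr q (pl q (Dn F u)) v)).
Proof.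
move=> HF SC v0 u.
have [Pv [Pv' [ipv [Pv'v nPvv]]]] := cover HF v0.
have Dv := D_eq HF ipv Pv'v nPvv.
split.
  move=> Du; case: (classic (u = 0)) => u0; [by left | right].
  split=> //; split; first by apply: cl_in.
  case: Du => A [FA [nAv Au]].
  have [Pu [Pu' [ipu [Pu'u nPuu]]]] := cover HF u0.
  have Du' := D_eq HF ipu Pu'u nPuu.
  move=> /(cl_ext q Du') /(cl_sub_P' SC ipu) H.
  by apply: nAv; apply: (above HF ipu Pu'u nPuu FA Au).
case=> [-> | [u0 [cvu ncuv]]].
  by apply/Dv; apply: sub_0; apply: (fl_sub HF); case: ipv.
have [Pu [Pu' [ipu [Pu'u nPuu]]]] := cover HF u0.
have Du' := D_eq HF ipu Pu'u nPuu.
apply/Dv; case: (classic (Pv u)) => // nPvu; exfalso.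
have FPv : F Pv by case: ipv.
have sPvPu := Dn_sub HF ipu Pu'u nPuu FPv nPvu.
have ncl : ~ pr q (pl q Pv) v.
  move=> H; apply: ncuv; apply/(cl_ext q Du'); exact: (cl_mono sPvPu H).
have cvu' : pr q (pl q Pv) u by apply/(cl_ext q Dv).
case: (SC _ _ ipv) => H; first by apply: nPvu; apply: H.
by apply: ncl; apply/H.
Qed.

Lemma Up_eq (K : fieldType) (X : lmodType K) (F : (X -> Prop) -> Prop) P P' v :
  gen_flag F -> imm_pair F P P' -> P' v -> ~ P v -> forall u, Up F v u <-> P' u.
Proof.
move=> HF ip P'v nPv u; have [FP [FP' _]] := ip; split.
  case=> [-> | [u0 Hu]]; first by apply: sub_0; apply: (fl_sub HF).
  case: (classic (P' u)) => // nP'u; exfalso.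
  have : Dn F u v by exists P'.
  by move/Hu => [A [_ [nAv Av]]].
move=> P'u; case: (classic (u = 0)) => u0; [by left | right]; split=> //.
move=> x [A [FA [nAu Ax]]]; exists A; split=> //; split=> //.
have [_ ch _ _] := HF.
have sAP' : incl A P' by case: (ch A P' FA FP') => // H; case: nAu; apply: H.
have sAP := L1 HF ip FA sAP' (fun H => nAu (H u P'u)).
by move=> Av; apply: nPv; apply: sAP.
Qed.

Lemma pred_ext (T : Type) (A B : T -> Prop) : (forall x, A x <-> B x) -> A = B.
Proof. by move=> e; apply: functional_extensionality => x; apply: propositional_extensionality. Qed.

Lemma F_char (K : fieldType) (X : lmodType K) (F : (X -> Prop) -> Prop) :
  gen_flag F -> forall A, F A <-> exists v, v <> 0 /\ (A = Dn F v \/ A = Up F v).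
Proof.
move=> HF A; split.
  move=> FA; have [_ _ H3 _] := HF; have [P [P' [ip eA]]] := H3 A FA.
  have [_ [_ [[sPP' nP'P] _]]] := ip.
  have [x [P'x nPx]] : exists x, P' x /\ ~ P x.
    apply: NNPP => H; apply: nP'P => x P'x; apply: NNPP => nPx; apply: H; by exists x.
  have x0 : x <> 0.
    move=> e; apply: nPx; rewrite e; apply: sub_0; apply: (fl_sub HF); by case: ip.
  exists x; split=> //; case: eA => ->; [left | right]; apply: pred_ext => y; apply: iff_sym.
    exact: (D_eq HF ip P'x nPx).
  exact: (Up_eq HF ip P'x nPx).
case=> v [v0 eA].
have [P [P' [ip [P'v nPv]]]] := cover HF v0; have [FP [FP' _]] := ip.
case: eA => ->.
  by have -> : Dn F v = P by apply: pred_ext; apply: (D_eq HF ip P'v nPv).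
by have -> : Up F v = P' by apply: pred_ext; apply: (Up_eq HF ip P'v nPv).
Qed.

Lemma F_eq_of (K : fieldType) (X : lmodType K) (F1 F2 : (X -> Prop) -> Prop) :
  gen_flag F1 -> gen_flag F2 -> (forall v, v <> 0 -> Dn F1 v = Dn F2 v) -> F1 = F2.
Proof.
move=> H1 H2 eD; apply: pred_ext => A; rewrite (F_char H1) (F_char H2).
have eU : forall v, v <> 0 -> Up F1 v = Up F2 v.
  move=> v v0; apply: pred_ext => u; rewrite /Up.
  case: (classic (u = 0)) => u0.
    by split=> _; left.
  by rewrite (eD v v0) (eD u u0).
split; case=> v [v0 e]; exists v; split=> //.
  by rewrite -(eD v v0) -(eU v v0).
by rewrite (eD v v0) (eU v v0).
Qed.

Lemma Dn_eq_of (K : fieldType) (X Y : lmodType K) (q : X -> Y -> K) (F1 F2 : (X -> Prop) -> Prop) :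
  gen_flag F1 -> gen_flag F2 -> SCh q F1 -> SCh q F2 ->
  (forall v u, v <> 0 -> (pr q (pl q (Dn F1 v)) u <-> pr q (pl q (Dn F2 v)) u)) ->
  forall v, v <> 0 -> Dn F1 v = Dn F2 v.
Proof.
move=> H1 H2 S1 S2 ec v v0; apply: pred_ext => u.
rewrite (D_char H1 S1 v0) (D_char H2 S2 v0).
case: (classic (u = 0)) => u0; first by split=> _; left.
by rewrite (ec v u v0) (ec u v u0).
Qed.

Definition RF (K : fieldType) (X Y : lmodType K) (q : X -> Y -> K) (F : (X -> Prop) -> Prop) v w :=
  forall A, F A -> A v \/ pl q A w.
Definition RG (K : fieldType) (X Y : lmodType K) (q : X -> Y -> K) (G : (Y -> Prop) -> Prop) v w :=
  forall B, G B -> B w \/ pr q B v.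
Definition Tau1 (K : fieldType) (X Y : lmodType K) (q : X -> Y -> K) F G :=
  forall v w, RF q F v w -> forall B, G B -> forall x, pr q B x -> pr q B (q x w *: v).
Definition Tau2 (K : fieldType) (X Y : lmodType K) (q : X -> Y -> K) F G :=
  forall v w, RG q G v w -> forall A, F A -> forall y, pl q A y -> pl q A (q v y *: w).

Lemma core (K : fieldType) (X Y : lmodType K) (q : X -> Y -> K)
  (ql : forall (y : Y) (a : K) (u v : X), q (a *: u + v) y = a * q u y + q v y)
  (qr : forall (u : X) (a : K) (y z : Y), q u (a *: y + z) = a * q u y + q u z)
  F G : gen_flag F -> gen_flag G -> SCh (fun y x => q x y) G -> Tau1 q F G -> Tau2 q F G ->
  forall v u, v <> 0 -> (forall w, RF q F v w /\ RG q G v w -> q u w = 0) ->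
  forall w0, pl q (Dn F v) w0 -> q u w0 = 0.
Proof.
move=> HF HG SCG T1 T2 v u v0 Hu w0 Hw0.
have qr' : forall (y : X) (a : K) (u v : Y), q y (a *: u + v) = a * q y u + q y v.
  by move=> y a u1 v1; apply: qr.
have [Pv [Pv' [ipv [Pv'v nPvv]]]] := cover HF v0.
have Dv := D_eq HF ipv Pv'v nPvv.
have FPv : F Pv by case: ipv.
have RF_of : forall w, pl q Pv w -> RF q F v w.
  move=> w Hw A FA; case: (classic (A v)) => Av; [by left | right].
  by move=> x Ax; apply: Hw; apply: (Dn_sub HF ipv Pv'v nPvv FA Av).
have {}Hw0 : pl q Pv w0 by move=> x Px; apply: Hw0; apply/Dv.
case: (classic (RG q G v w0)) => RG0; first by apply: Hu; split=> //; apply: RF_of.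
have [B0 [GB0 [nB0w0 nprB0]]] : exists B0, G B0 /\ ~ B0 w0 /\ ~ pr q B0 v.
  apply: NNPP => H; apply: RG0 => B GB.
  case: (classic (B w0)) => Bw; [by left | right].
  apply: NNPP => nb; apply: H; exists B; by split.
have w00 : w0 <> 0.
  by move=> e; apply: nB0w0; rewrite e; apply: sub_0; apply: (fl_sub HG).
have [B' [B'' [ipw [B''w0 nB'w0]]]] := cover HG w00.
have GB' : G B' by case: ipw.
have sB0B' := Dn_sub HG ipw B''w0 nB'w0 GB0 nB0w0.
have nprB' : ~ pr q B' v by move=> H; apply: nprB0 => y B0y; apply: H; apply: sB0B'.
have fact_i : forall B, G B -> ~ pr q B v -> forall x, pr q B x -> q x w0 = 0.
  move=> B GB nB x Hx.
  have H1 := T1 v w0 (RF_of w0 Hw0) B GB x Hx.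
  have [y0 [By0 ny0]] : exists y0, B y0 /\ q v y0 <> 0.
    apply: NNPP => H; apply: nB => y By; apply: NNPP => ny; apply: H; exists y; by split.
  have := H1 y0 By0; rewrite (linZl ql) => /eqP; rewrite mulf_eq0 => /orP [/eqP //|/eqP //].
apply: (fact_i B' GB' nprB' u) => y B'y.
case: (classic (y = 0)) => [->|y0]; first by apply: (lin0l (q := fun y x => q x y)).
have [P [P' [ipy [P'y nPy]]]] := cover HG y0.
have GP : G P by case: ipy.
have sP'B' := above HG ipy P'y nPy GB' B'y.
have clP : forall x, pl q (pr q P) x -> B' x.
  move=> x Hx; apply: sP'B'; exact: (cl_sub_P' SCG ipy Hx).
have prPv : pr q P v.
  apply: NNPP => n; apply: nB'w0; apply: clP => x Hx; exact: (fact_i P GP n x Hx).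
have RG_of : forall z, pr q P z -> RG q G z y.
  move=> z Hz B GB; case: (classic (B y)) => By; [by left | right].
  move=> y1 By1; apply: Hz; exact: (Dn_sub HG ipy P'y nPy GB By).
have Sy : pl q Pv y.
  case: (classic (exists z, pr q P z /\ exists y', pl q Pv y' /\ q z y' <> 0)).
    move=> [z [prz [y' [Sy' nz]]]] x Px.
    have := T2 z y (RG_of z prz) Pv FPv y' Sy' x Px.
    rewrite (linZl qr') => /eqP; rewrite mulf_eq0 => /orP [/eqP //|/eqP //].
  move=> H; exfalso; apply: nB'w0; apply: clP => x prPx.
  apply: NNPP => nx; apply: H; exists x; split=> //; exists w0; by split.
by apply: Hu; split; [apply: RF_of | apply: RG_of].
Qed.

Lemma cl_char (K : fieldType) (X Y : lmodType K) (q : X -> Y -> K)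
  (ql : forall (y : Y) (a : K) (u v : X), q (a *: u + v) y = a * q u y + q v y)
  (qr : forall (u : X) (a : K) (y z : Y), q u (a *: y + z) = a * q u y + q u z)
  F G : gen_flag F -> gen_flag G -> SCh (fun y x => q x y) G -> Tau1 q F G -> Tau2 q F G ->
  forall v u, v <> 0 ->
  (pr q (pl q (Dn F v)) u <-> (forall w, RF q F v w /\ RG q G v w -> q u w = 0)).
Proof.
move=> HF HG SCG T1 T2 v u v0; split; last exact: (core ql qr HF HG SCG T1 T2 v0).
move=> Hu w [RFw _]; apply: Hu => x [A [FA [nAv Ax]]].
by case: (RFw A FA) => // H; apply: H.
Qed.

Lemma fam_eq (K : fieldType) (X Y : lmodType K) (q : X -> Y -> K)
  (ql : forall (y : Y) (a : K) (u v : X), q (a *: u + v) y = a * q u y + q v y)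
  (qr : forall (u : X) (a : K) (y z : Y), q u (a *: y + z) = a * q u y + q u z)
  F1 G1 F2 G2 : gen_flag F1 -> gen_flag G1 -> gen_flag F2 -> gen_flag G2 ->
  SCh q F1 -> SCh q F2 -> SCh (fun y x => q x y) G1 -> SCh (fun y x => q x y) G2 ->
  Tau1 q F1 G1 -> Tau2 q F1 G1 -> Tau1 q F2 G2 -> Tau2 q F2 G2 ->
  (forall v w, RF q F1 v w /\ RG q G1 v w <-> RF q F2 v w /\ RG q G2 v w) ->
  F1 = F2.
Proof.
move=> HF1 HG1 HF2 HG2 SF1 SF2 SG1 SG2 T11 T21 T12 T22 Hn.
apply: (F_eq_of HF1 HF2); apply: (Dn_eq_of HF1 HF2 SF1 SF2) => v u v0.
rewrite (cl_char ql qr HF1 HG1 SG1 T11 T21 u v0) (cl_char ql qr HF2 HG2 SG2 T12 T22 u v0).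
by split=> H w /Hn /H.
Qed.

Lemma SC_of (K : fieldType) (V W : lmodType K) (p : V -> W -> K) F :
  semiclosed (closV p) F -> SCh p F.
Proof.
move=> H P P' ip; case: (H P P' ip) => e; [left | right] => x.
  by move=> Hx; rewrite -e; exact: Hx.
by split=> Hx; [rewrite -e; exact: Hx | rewrite -e in Hx; exact: Hx].
Qed.

Lemma SCW_of (K : fieldType) (V W : lmodType K) (p : V -> W -> K) G :
  semiclosed (closW p) G -> SCh (fun y x => p x y) G.
Proof.
move=> H P P' ip; case: (H P P' ip) => e; [left | right] => x.
  by move=> Hx; rewrite -e; exact: Hx.
by split=> Hx; [rewrite -e; exact: Hx | rewrite -e in Hx; exact: Hx].
Qed.

Lemma StV_iff (K : fieldType) (V W : lmodType K) (p : V -> W -> K) F v w :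
  gen_flag F -> StV p F [:: (v, w)] <-> RF p F v w.
Proof.
move=> HF; rewrite /StV /stab /actV; split.
  move=> H A FA; case: (classic (A v)) => Av; [by left | right] => x Ax.
  have := H A FA x Ax; rewrite big_seq1 /= => Hc.
  apply: NNPP => nc; apply: Av; apply: (sub_Zinv (fl_sub HF FA) _ Hc).
  by apply/eqP.
move=> H A FA x Ax; rewrite big_seq1 /=.
case: (H A FA) => [Av | Aw]; first by apply: sub_Z => //; apply: (fl_sub HF).
by rewrite (Aw x Ax) scale0r; apply: sub_0; apply: (fl_sub HF).
Qed.

Lemma StW_iff (K : fieldType) (V W : lmodType K) (p : V -> W -> K) G v w :
  gen_flag G -> StW p G [:: (v, w)] <-> RG p G v w.
Proof.
move=> HG; rewrite /StW /stab /actW; split.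
  move=> H B GB; case: (classic (B w)) => Bw; [by left | right] => y By.
  have := H B GB y By; rewrite big_seq1 /= -scaleNr => Hc.
  apply: NNPP => nc; apply: Bw; apply: (sub_Zinv (fl_sub HG GB) _ Hc).
  by rewrite oppr_eq0; apply/eqP.
move=> H B GB y By; rewrite big_seq1 /= -scaleNr.
case: (H B GB) => [Bw | Bv]; first by apply: sub_Z => //; apply: (fl_sub HG).
by rewrite (Bv y By) oppr0 scale0r; apply: sub_0; apply: (fl_sub HG).
Qed.

Lemma Tau1_of (K : fieldType) (V W : lmodType K) (p : V -> W -> K) F G :
  gen_flag F -> (forall s, StV p F s -> StV p (perp_famW p G) s) -> Tau1 p F G.
Proof.
move=> HF H v w RFw B GB x Hx.
have H1 := H [:: (v, w)] (proj2 (StV_iff p v w HF) RFw) (perpW p B).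
have := H1 (ex_intro _ B (conj GB erefl)) x Hx.
by rewrite /actV big_seq1.
Qed.

Lemma Tau2_of (K : fieldType) (V W : lmodType K) (p : V -> W -> K)
  (p_lin_r : forall (u : V) (a : K) (y z : W), p u (a *: y + z) = a * p u y + p u z) F G :
  gen_flag G -> (forall s, StW p G s -> StW p (perp_famV p F) s) -> Tau2 p F G.
Proof.
move=> HG H v w RGw A FA y Hy.
have H0 := H [:: (v, w)] (proj2 (StW_iff p v w HG) RGw) (perpV p A).
have H1 := H0 (ex_intro _ A (conj FA erefl)) y Hy.
move=> x Ax; have := H1 x Ax; rewrite /actW big_seq1 /=.
have pr' : forall (y0 : V) (a : K) (u v0 : W), (fun z x => p x z) (a *: u + v0) y0 = a * (fun z x => p x z) u y0 + (fun z x => p x z) v0 y0.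
  by move=> y0 a u v0; apply: p_lin_r.
have e : p x (- (p v y *: w)) = - p x (p v y *: w) := linNl (q := fun z x => p x z) pr' _ _.
rewrite e => /eqP; rewrite oppr_eq0 => /eqP //.
Qed.

Theorem proposition3p8 (K : numClosedFieldType) (V W : lmodType K) (p : V -> W -> K)
  (p_lin_l : forall (y : W) (a : K) (u v : V), p (a *: u + v) y = a * p u y + p v y)
  (p_lin_r : forall (u : V) (a : K) (y z : W), p u (a *: y + z) = a * p u y + p u z)
  (nd_l : forall u : V, (forall y : W, p u y = 0) -> u = 0)
  (nd_r : forall y : W, (forall u : V, p u y = 0) -> y = 0)
  (cV : countable_dim V) (cW : countable_dim W)
  (F1 F2 : (V -> Prop) -> Prop) (G1 G2 : (W -> Prop) -> Prop) :
  taut_couple p F1 G1 -> taut_couple p F2 G2 ->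
  (forall s : seq (V * W), (StV p F1 s /\ StW p G1 s) <-> (StV p F2 s /\ StW p G2 s)) ->
  F1 = F2 /\ G1 = G2.
Proof.
move=> [HF1 [SF1 [HG1 [SG1 [T51 T61]]]]] [HF2 [SF2 [HG2 [SG2 [T52 T62]]]]] Hs.
have Hn : forall v w, RF p F1 v w /\ RG p G1 v w <-> RF p F2 v w /\ RG p G2 v w.
  move=> v w; have [H1 H2] := Hs [:: (v, w)].
  have e1 := StV_iff p v w HF1; have e2 := StW_iff p v w HG1.
  have e3 := StV_iff p v w HF2; have e4 := StW_iff p v w HG2.
  split.
    by move=> [a b]; have [c d] := H1 (conj (proj2 e1 a) (proj2 e2 b)); split; [apply/e3 | apply/e4].
  by move=> [a b]; have [c d] := H2 (conj (proj2 e3 a) (proj2 e4 b)); split; [apply/e1 | apply/e2].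
have T1a := Tau1_of HF1 T61; have T2a := Tau2_of p_lin_r HG1 T51.
have T1b := Tau1_of HF2 T62; have T2b := Tau2_of p_lin_r HG2 T52.
split.
  exact: (fam_eq p_lin_l p_lin_r HF1 HG1 HF2 HG2 (SC_of SF1) (SC_of SF2)
            (SCW_of SG1) (SCW_of SG2) T1a T2a T1b T2b Hn).
have qlW : forall (y : V) (a : K) (u v : W), (fun z x => p x z) (a *: u + v) y =
   a * (fun z x => p x z) u y + (fun z x => p x z) v y by move=> y a u v; apply: p_lin_r.
have qrW : forall (u : W) (a : K) (y z : V), (fun z x => p x z) u (a *: y + z) =
   a * (fun z x => p x z) u y + (fun z x => p x z) u z by move=> u a y z; apply: p_lin_l.
apply: (fam_eq qlW qrW HG1 HF1 HG2 HF2 (SCW_of SG1) (SCW_of SG2) (SC_of SF1) (SC_of SF2)).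
- by move=> w v H B FB x Hx; exact: (T2a v w H B FB x Hx).
- by move=> w v H A GA y Hy; exact: (T1a v w H A GA y Hy).
- by move=> w v H B FB x Hx; exact: (T2b v w H B FB x Hx).
- by move=> w v H A GA y Hy; exact: (T1b v w H A GA y Hy).
by move=> w v; split=> [[a b]|[a b]]; have [c d] := Hn v w; [have [] := c (conj b a) | have [] := d (conj b a)].
Qed.
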